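(* Let $\mathcal E_i\equiv1\to H_i\xrightarrow{\alpha_i}G_i\xrightarrow{\beta_i}K_i\to1$ ($i=1,2$) be central extensions of multiplicative Lie algebras that are isoclinic via $(\lambda,\mu)$. Then: (1) $G_1$ and $G_2$ are isoclinic via $(\bar\lambda,\mu)$, where $\bar\lambda:G_1/\mathcal Z(G_1)\to G_2/\mathcal Z(G_2)$ is the isomorphism induced by $\lambda$, namely $\bar\lambda(g_1\mathcal Z(G_1))=g_2\mathcal Z(G_2)$ whenever $\beta_2(g_2)=\lambda(\beta_1(g_1))$; (2) $\alpha_1(H_1)=\mathcal Z(G_1)$ if and only if $\alpha_2(H_2)=\mathcal Z(G_2)$.
   Context: A multiplicative Lie algebra is a group $(G,\cdot)$ with a binary operation $\star$ such that for all $x,y,z\in G$: $x\star x=1$; $x\star(yz)=(x\star y)\,{}^y(x\star z)$; $(xy)\star z={}^x(y\star z)(x\star z)$; $((x\star y)\star{}^yz)((y\star z)\star{}^zx)((z\star x)\star{}^xy)=1$; ${}^z(x\star y)={}^zx\star{}^zy$, where ${}^xy=xyx^{-1}$. $Z(G)$ is the group center, $LZ(G)=\{x: x\star y=1\ \forall y\}$, $\mathcal Z(G)=LZ(G)\cap Z(G)$; $[x,y]$ is the group commutator; ${}^M[G,G]=(G\star G)[G,G]$ with $G\star G$ the ideal generated by all $a\star b$. A central extension is a short exact sequence $1\to H\xrightarrow{\alpha}G\xrightarrow{\beta}K\to1$ of multiplicative Lie algebras with $\alpha(H)\subseteq\mathcal Z(G)$. Central extensions $\mathcal E_1,\mathcal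 E_2$ are isoclinic via $(\lambda,\mu)$ if $\lambda:K_1\to K_2$ and $\mu:{}^M[G_1,G_1]\to{}^M[G_2,G_2]$ are multiplicative Lie algebra isomorphisms with $\mu([g,g'])=[h,h']$ and $\mu(g\star g')=h\star h'$ whenever $g,g'\in G_1$, $h,h'\in G_2$ satisfy $\beta_2(h)=\lambda\beta_1(g)$, $\beta_2(h')=\lambda\beta_1(g')$. Two multiplicative Lie algebras $G_1,G_2$ are isoclinic via $(\bar\lambda,\mu)$ if $\bar\lambda:G_1/\mathcal Z(G_1)\to G_2/\mathcal Z(G_2)$ and $\mu:{}^M[G_1,G_1]\to{}^M[G_2,G_2]$ are isomorphisms with $\mu([g,g'])=[h,h']$, $\mu(g\star g')=h\star h'$ whenever $\bar\lambda(g\mathcal Z(G_1))=h\mathcal Z(G_2)$, $\bar\lambda(g'\mathcal Z(G_1))=h'\mathcal Z(G_2)$. *)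

(* Defs.v *)
Set Implicit Arguments.

Record MLA := {
  car :> Type;
  mul : car -> car -> car;
  one : car;
  inv : car -> car;
  star : car -> car -> car;
  mulA : forall x y z, mul x (mul y z) = mul (mul x y) z;
  mul1g : forall x, mul one x = x;
  mulg1 : forall x, mul x one = x;
  mulVg : forall x, mul (inv x) x = one;
  mulgV : forall x, mul x (inv x) = one;
  star_nil : forall x, star x x = one;
  star_mulr : forall x y z,
      star x (mul y z) = mul (star x y) (mul (mul y (star x z)) (inv y));
  star_mull : forall x y z,
      star (mul x y) z = mul (mul (mul x (star y z)) (inv x)) (star x z);
  star_jacobi : forall x y z,
      mul (mul (star (star x y) (mul (mul y z) (inv y)))
               (star (star y z) (mul (mul z x) (inv z))))
          (star (star z x) (mul (mul x y) (inv x))) = one;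
  star_conj : forall x y z,
      mul (mul z (star x y)) (inv z)
      = star (mul (mul z x) (inv z)) (mul (mul z y) (inv z))
}.

Arguments mul {m} _ _.
Arguments one {m}.
Arguments inv {m} _.
Arguments star {m} _ _.

Section Defs.
Variable G : MLA.

Definition conjg (x y : G) : G := mul (mul x y) (inv x).
Definition commg (x y : G) : G := mul (mul (mul x y) (inv x)) (inv y).

Definition in_center (x : G) : Prop := forall y : G, mul x y = mul y x.
Definition in_lie_center (x : G) : Prop := forall y : G, star x y = one.
Definition in_Zcal (x : G) : Prop := in_lie_center x /\ in_center x.

Inductive in_star_ideal : G -> Prop :=
  | si_gen : forall a b, in_star_ideal (star a b)
  | si_one : in_star_ideal one
  | si_mul : forall x y, in_star_ideal x -> in_star_ideal y -> in_star_ideal (mul x y)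
  | si_inv : forall x, in_star_ideal x -> in_star_ideal (inv x)
  | si_conj : forall g x, in_star_ideal x -> in_star_ideal (conjg g x)
  | si_starl : forall g x, in_star_ideal x -> in_star_ideal (star g x)
  | si_starr : forall g x, in_star_ideal x -> in_star_ideal (star x g).

Inductive in_derived : G -> Prop :=
  | dv_gen : forall a b, in_derived (commg a b)
  | dv_one : in_derived one
  | dv_mul : forall x y, in_derived x -> in_derived y -> in_derived (mul x y)
  | dv_inv : forall x, in_derived x -> in_derived (inv x).

Definition in_MGG (x : G) : Prop :=
  exists a b, in_star_ideal a /\ in_derived b /\ x = mul a b.

End Defs.

Arguments conjg {G} _ _.
Arguments commg {G} _ _.
Arguments in_center {G} _.
Arguments in_lie_center {G} _.
Arguments in_Zcal {G} _.
Arguments in_star_ideal {G} _.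
Arguments in_derived {G} _.
Arguments in_MGG {G} _.

Definition mla_hom {G1 G2 : MLA} (f : G1 -> G2) : Prop :=
  forall x y : G1, f (mul x y) = mul (f x) (f y) /\ f (star x y) = star (f x) (f y).

Definition mla_iso {G1 G2 : MLA} (f : G1 -> G2) : Prop :=
  mla_hom f /\ (forall x y, f x = f y -> x = y) /\ (forall y, exists x, f x = y).

(** An MLA isomorphism ^M[G1,G1] -> ^M[G2,G2], given by a function on G1
    whose behaviour is only relevant on ^M[G1,G1]. *)
Definition MGG_iso {G1 G2 : MLA} (mu : G1 -> G2) : Prop :=
  (forall x, in_MGG x -> in_MGG (mu x)) /\
  (forall x y, in_MGG x -> in_MGG y ->
     mu (mul x y) = mul (mu x) (mu y) /\ mu (star x y) = star (mu x) (mu y)) /\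
  (forall x y, in_MGG x -> in_MGG y -> mu x = mu y -> x = y) /\
  (forall y, in_MGG y -> exists x, in_MGG x /\ mu x = y).

Definition central_extension {H G K : MLA} (alpha : H -> G) (beta : G -> K) : Prop :=
  mla_hom alpha /\ mla_hom beta /\
  (forall x y, alpha x = alpha y -> x = y) /\
  (forall k, exists g, beta g = k) /\
  (forall g, (exists h, alpha h = g) <-> beta g = one) /\
  (forall h, in_Zcal (alpha h)).

Definition ext_isoclinic_via {H1 G1 K1 H2 G2 K2 : MLA}
    (alpha1 : H1 -> G1) (beta1 : G1 -> K1) (alpha2 : H2 -> G2) (beta2 : G2 -> K2)
    (lam : K1 -> K2) (mu : G1 -> G2) : Prop :=
  mla_iso lam /\ MGG_iso mu /\
  (forall (g g' : G1) (h h' : G2),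
     beta2 h = lam (beta1 g) -> beta2 h' = lam (beta1 g') ->
     mu (commg g g') = commg h h' /\ mu (star g g') = star h h').

(** Maps G1/𝒵(G1) -> G2/𝒵(G2) are represented on representatives: f : G1 -> G2
    represents the map  g 𝒵(G1) |-> f g 𝒵(G2).  Cosets: x𝒵 = y𝒵 iff x^-1 y ∈ 𝒵. *)
Definition same_coset {G : MLA} (x y : G) : Prop := in_Zcal (mul (inv x) y).

Definition quotZ_iso {G1 G2 : MLA} (f : G1 -> G2) : Prop :=
  (forall x y, same_coset x y -> same_coset (f x) (f y)) /\
  (forall x y, same_coset (f (mul x y)) (mul (f x) (f y))) /\
  (forall x y, same_coset (f (star x y)) (star (f x) (f y))) /\
  (forall x y, same_coset (f x) (f y) -> same_coset x y) /\
  (forall y, exists x, same_coset (f x) y).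

Definition mla_isoclinic_via {G1 G2 : MLA} (lb : G1 -> G2) (mu : G1 -> G2) : Prop :=
  quotZ_iso lb /\ MGG_iso mu /\
  (forall (g g' : G1) (h h' : G2),
     same_coset (lb g) h -> same_coset (lb g') h' ->
     mu (commg g g') = commg h h' /\ mu (star g g') = star h h').

(* Main.v *)
Require Import Defs.
From Stdlib Require Import ClassicalEpsilon.

Section GT.
Variable G : MLA.
Implicit Types x y z a b : G.

Lemma assocR x y z : mul (mul x y) z = mul x (mul y z).
Proof. now rewrite mulA. Qed.
Lemma mulKg x y : mul x (mul (inv x) y) = y.
Proof. now rewrite mulA, mulgV, mul1g. Qed.
Lemma mulVKg x y : mul (inv x) (mul x y) = y.
Proof. now rewrite mulA, mulVg, mul1g. Qed.
Lemma cancel_l a x y : mul a x = mul a y -> x = y.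
Proof. intro H. rewrite <- (mulVKg a x), H. apply mulVKg. Qed.
Lemma cancel_r a x y : mul x a = mul y a -> x = y.
Proof. intro H. rewrite <- (mulg1 _ x), <- (mulgV _ a), mulA, H, <- mulA, mulgV, mulg1. reflexivity. Qed.
Lemma inv_uniq a b : mul a b = one -> b = inv a.
Proof. intro H. apply (cancel_l a). now rewrite H, mulgV. Qed.
Lemma inv_inv a : inv (inv a) = a.
Proof. symmetry. apply inv_uniq. apply mulVg. Qed.
Lemma inv_one : inv (@one G) = one.
Proof. symmetry. apply inv_uniq. apply mul1g. Qed.
Lemma inv_mul a b : inv (mul a b) = mul (inv b) (inv a).
Proof. symmetry. apply inv_uniq. rewrite assocR, mulKg. apply mulgV. Qed.
End GT.

Global Hint Rewrite assocR mul1g mulg1 mulgV mulVg mulKg mulVKg inv_mul inv_inv inv_one star_nil : gn.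

Ltac gn := autorewrite with gn in *.

Section GT2.
Variable G : MLA.
Implicit Types x y z a b : G.

Lemma commg_one a b : commg a b = one -> mul a b = mul b a.
Proof. unfold commg. intro H. apply (cancel_r _ (inv a)). apply (cancel_r _ (inv b)).
  gn. rewrite H. reflexivity. Qed.

Lemma center_commg a b : in_center a -> commg a b = one.
Proof. intro H. unfold commg. rewrite H. now gn. Qed.

Lemma star_anti x y : mul (star y x) (star x y) = one.
Proof.
  pose proof (star_nil _ (mul x y)) as H.
  rewrite star_mull, star_mulr, (star_mulr _ x x y) in H.
  rewrite star_nil in H. gn.
  apply (cancel_l _ x). apply (cancel_r _ (inv x)). gn. exact H.
Qed.

Lemma lz_starr a z : in_lie_center z -> star a z = one.
Proof. intro H. pose proof (star_anti a z) as E. rewrite (H a), mul1g in E. exact E. Qed.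

Lemma commg_zl a z b : in_Zcal z -> commg (mul a z) b = commg a b.
Proof. intros [_ Hc]. unfold commg. gn. rewrite <- (assocR _ z b), Hc. gn. reflexivity. Qed.

Lemma commg_zr a b z : in_Zcal z -> commg a (mul b z) = commg a b.
Proof. intros [_ Hc]. unfold commg. gn. rewrite <- (assocR _ z (inv a)), Hc. gn. reflexivity. Qed.

Lemma star_zl a z b : in_Zcal z -> star (mul a z) b = star a b.
Proof. intros [Hl _]. rewrite star_mull, (Hl b). now gn. Qed.

Lemma star_zr a b z : in_Zcal z -> star a (mul b z) = star a b.
Proof. intros [Hl _]. rewrite star_mulr, (lz_starr a z Hl). now gn. Qed.

Lemma MGG_one : in_MGG (@one G).
Proof. exists one, one. repeat split; try constructor. now gn. Qed.
Lemma MGG_commg a b : in_MGG (commg a b).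
Proof. exists one, (commg a b). repeat split; try constructor. now gn. Qed.
Lemma MGG_star a b : in_MGG (star a b).
Proof. exists (star a b), one. repeat split; try constructor. now gn. Qed.
End GT2.

Lemma hom_one {G1 G2 : MLA} (f : G1 -> G2) : mla_hom f -> f one = one.
Proof. intro H. apply (cancel_l _ (f one)). rewrite <- (proj1 (H one one)). now gn. Qed.

Lemma hom_inv {G1 G2 : MLA} (f : G1 -> G2) x : mla_hom f -> f (inv x) = inv (f x).
Proof. intro H. apply inv_uniq. rewrite <- (proj1 (H _ _)), mulgV. now apply hom_one. Qed.

Lemma mu_one {G1 G2 : MLA} (mu : G1 -> G2) : MGG_iso mu -> mu one = one.
Proof. intros [_ [H _]]. destruct (H one one (MGG_one _) (MGG_one _)) as [E _].
  apply (cancel_l _ (mu one)). rewrite <- E. now gn. Qed.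

Lemma same_beta {H G K : MLA} (alpha : H -> G) (beta : G -> K) a b :
  central_extension alpha beta -> beta a = beta b -> same_coset a b.
Proof. intros (ha & hb & _ & _ & hk & hz) E. unfold same_coset.
  assert (beta (mul (inv a) b) = one) as B.
  { rewrite (proj1 (hb _ _)), hom_inv, E by exact hb. apply mulVg. }
  apply hk in B. destruct B as [h <-]. apply hz. Qed.

Theorem proposition4p3 (H1 G1 K1 H2 G2 K2 : MLA)
    (alpha1 : H1 -> G1) (beta1 : G1 -> K1) (alpha2 : H2 -> G2) (beta2 : G2 -> K2)
    (lam : K1 -> K2) (mu : G1 -> G2) :
  central_extension alpha1 beta1 ->
  central_extension alpha2 beta2 ->
  ext_isoclinic_via alpha1 beta1 alpha2 beta2 lam mu ->
  (exists lb : G1 -> G2,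
      (* lb represents the map induced by lam:
         lb(g1 𝒵(G1)) = g2 𝒵(G2) whenever beta2 g2 = lam (beta1 g1) *)
      (forall (g1 : G1) (g2 : G2), beta2 g2 = lam (beta1 g1) -> same_coset (lb g1) g2) /\
      mla_isoclinic_via lb mu) /\
  ((forall g : G1, (exists h, alpha1 h = g) <-> in_Zcal g) <->
   (forall g : G2, (exists h, alpha2 h = g) <-> in_Zcal g)).
Proof.
  intros CE1 CE2 ISO.
  pose proof CE1 as (ha1 & hb1 & ai1 & bs1 & hk1 & hz1).
  pose proof CE2 as (ha2 & hb2 & ai2 & bs2 & hk2 & hz2).
  destruct ISO as ((hl & li & ls) & MU & HC).
  pose proof MU as (_ & _ & mui & _).
  assert (exists lb : G1 -> G2, forall g, beta2 (lb g) = lam (beta1 g)) as [lb Hlb].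
  { exists (fun g => proj1_sig (constructive_indefinite_description _ (bs2 (lam (beta1 g))))).
    intro g. exact (proj2_sig (constructive_indefinite_description _ (bs2 (lam (beta1 g))))). }
  assert (L : forall g1 g2, beta2 g2 = lam (beta1 g1) -> (in_Zcal g1 <-> in_Zcal g2)).
  { intros g1 g2 E. split.
    - intros [Hl Hc]. 
      assert (forall h', commg g2 h' = one /\ star g2 h' = one) as K.
      { intro h'. destruct (ls (beta2 h')) as [k Hk]. destruct (bs1 k) as [g' <-].
        destruct (HC g1 g' g2 h' E (eq_sym Hk)) as [A B].
        rewrite <- A, <- B, center_commg, Hl by exact Hc. split; now apply mu_one. }
      split; intro h'. apply K. apply commg_one, K.
    - intros [Hl Hc].
      assert (forall g', commg g1 g' = one /\ star g1 g' = one) as K.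
      { intro g'. destruct (HC g1 g' g2 (lb g') E (Hlb g')) as [A B].
        rewrite (center_commg _ g2 (lb g') Hc) in A. rewrite (Hl (lb g')) in B.
        rewrite <- (mu_one mu MU) in A, B.
        split; apply mui; auto using MGG_one, MGG_commg, MGG_star. }
      split; intro h'. apply K. apply commg_one, K. }
  assert (BC : forall x y, beta2 (mul (inv (lb x)) (lb y)) = lam (beta1 (mul (inv x) y))).
  { intros x y. rewrite (proj1 (hb2 _ _)), (proj1 (hb1 _ _)), (proj1 (hl _ _)),
      !hom_inv, !Hlb by assumption. reflexivity. }
  split.
  - exists lb. split; [|split; [|split]].
    + intros g1 g2 E. apply (same_beta alpha2 beta2); auto. congruence.
    + split; [|split; [|split; [|split]]].
      * intros x y Hs. unfold same_coset in *. apply (L _ _ (BC x y)); assumption.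
      * intros x y. apply (same_beta alpha2 beta2); auto.
        rewrite (proj1 (hb2 _ _)), !Hlb, (proj1 (hb1 _ _)), (proj1 (hl _ _)). reflexivity.
      * intros x y. apply (same_beta alpha2 beta2); auto.
        rewrite (proj2 (hb2 _ _)), !Hlb, (proj2 (hb1 _ _)), (proj2 (hl _ _)). reflexivity.
      * intros x y Hs. unfold same_coset in *. apply (L _ _ (BC x y)); assumption.
      * intro y. destruct (ls (beta2 y)) as [k Hk]. destruct (bs1 k) as [x <-].
        exists x. apply (same_beta alpha2 beta2); auto. congruence.
    + exact MU.
    + intros g g' h h' S1 S2. unfold same_coset in *.
      replace h with (mul (lb g) (mul (inv (lb g)) h)) by apply mulKg.
      replace h' with (mul (lb g') (mul (inv (lb g')) h')) by apply mulKg.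
      rewrite commg_zl, commg_zr, star_zl, star_zr by assumption.
      apply HC; apply Hlb.
  - split.
    + intros P g. split. intros [h <-]. apply hz2.
      intro Z. apply hk2. destruct (ls (beta2 g)) as [k Hk]. destruct (bs1 k) as [x <-].
      assert (in_Zcal x) as Zx by (apply (L x g); auto).
      apply P in Zx. apply hk1 in Zx. rewrite <- Hk, Zx. now apply hom_one.
    + intros P g. split. intros [h <-]. apply hz1.
      intro Z. apply hk1. apply (L g (lb g) (Hlb g)), P, hk2 in Z.
      apply li. rewrite <- Hlb, Z. symmetry. now apply hom_one.
Qed.
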